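(* Fix a UL-chain $\mathbf{A}$ and a predicate language $\mathcal{P}$, and let $\mathscr{K}$ be a class of $\mathbf{A}$-structures for $\mathcal{P}$. If $\mathscr{K}$ satisfies the hereditary property (HP) and the joint embedding property (JEP) and is closed under unions of chains, then there is an $\mathbf{A}$-structure $\langle\mathbf{A},\mathbf{N}\rangle$ such that $\mathscr{K}=\{\langle\mathbf{A},\mathbf{M}\rangle \mid \mathrm{Age}(\mathbf{A},\mathbf{M})\subseteq \mathrm{Age}(\mathbf{A},\mathbf{N})\}$.
   Context: A UL-algebra is a structure $\mathbf{A}=\langle A,\wedge,\vee,\&,\to,\bar 0,\bar 1,\bot,\top\rangle$ such that $\langle A,\wedge,\vee,\bot,\top\rangle$ is a bounded lattice, $\langle A,\&,\bar 1\rangle$ is a commutative monoid, $a\& b\le c$ iff $b\le a\to c$, and $((a\to b)\wedge\bar 1)\vee((b\to a)\wedge \bar 1)=\bar 1$. A UL-chain is a UL-algebra with linear lattice order. An $\mathbf{A}$-structure $\langle\mathbf{A},\mathbf{M}\rangle$ for a predicate language $\mathcal{P}$ consists of a set $M$, a function $P_{\mathbf{M}}:M^n\to A$ for each $n$-ary predicate symbol $P$, and a function $F_{\mathbf{M}}:M^n\to M$ for each $n$-ary function symbol $F$; quantifier-free formulas (with connectives $\wedge,\vee,\&,\to,\bar0,\bar1,\bot,\top$) receive values in $A$ by evaluating terms as usual, atomic formulas via $P_{\mathbf{M}}$, and connectives via the operations of $\mathbf{A}$. A substructure of $\langle\mathbf{A},\mathbf{N}\rangle$ is $\langle\mathbf{A},\mathbf{M}\rangle$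 with $M\subseteq N$, agreeing on function symbols, and giving every quantifier-free formula the same value on tuples from $M$. An embedding is an injective map between universes commuting with function symbols and preserving values of all quantifier-free formulas (identity on $\mathbf{A}$); isomorphism = surjective embedding. Finitely generated means generated by a finite subset under the function symbols. A chain is a sequence of structures each a substructure of the later ones; its union is the structure on the union of universes with inherited interpretations. $\mathrm{Age}(\mathbf{A},\mathbf{N})$ is the class (up to isomorphism) of finitely generated substructures of $\langle\mathbf{A},\mathbf{N}\rangle$ and their isomorphic copies. HP: closed under substructures. JEP: any two members embed into a common member of the class. *)

(* Defs.v *)
From Stdlib Require Import List Fin.

Set Implicit Arguments.
Unset Strict Implicit.

Record ULAlgebra := {
  ul_car :> Type;
  ul_meet : ul_car -> ul_car -> ul_car;
  ul_join : ul_car -> ul_car -> ul_car;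
  ul_conj : ul_car -> ul_car -> ul_car;
  ul_impl : ul_car -> ul_car -> ul_car;
  ul_zero : ul_car;
  ul_one  : ul_car;
  ul_bot  : ul_car;
  ul_top  : ul_car;
  ul_meetA : forall a b c, ul_meet a (ul_meet b c) = ul_meet (ul_meet a b) c;
  ul_joinA : forall a b c, ul_join a (ul_join b c) = ul_join (ul_join a b) c;
  ul_meetC : forall a b, ul_meet a b = ul_meet b a;
  ul_joinC : forall a b, ul_join a b = ul_join b a;
  ul_meetK : forall a b, ul_meet a (ul_join a b) = a;
  ul_joinK : forall a b, ul_join a (ul_meet a b) = a;
  ul_meet_bot : forall a, ul_meet ul_bot a = ul_bot;
  ul_meet_top : forall a, ul_meet a ul_top = a;
  ul_conjA : forall a b c, ul_conj a (ul_conj b c) = ul_conj (ul_conj a b) c;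
  ul_conjC : forall a b, ul_conj a b = ul_conj b a;
  ul_conj1 : forall a, ul_conj ul_one a = a;
  (* residuation, with a <= b  :=  a /\ b = a *)
  ul_resid : forall a b c,
      ul_meet (ul_conj a b) c = ul_conj a b <-> ul_meet b (ul_impl a c) = b;
  ul_prelin : forall a b,
      ul_join (ul_meet (ul_impl a b) ul_one) (ul_meet (ul_impl b a) ul_one) = ul_one
}.

Definition ul_le (A : ULAlgebra) (a b : A) : Prop := @ul_meet A a b = a.

Definition UL_chain (A : ULAlgebra) : Prop := forall a b : A, @ul_le A a b \/ @ul_le A b a.

Record Language := {
  Fsym : Type;
  farity : Fsym -> nat;
  Psym : Type;
  parity : Psym -> nat
}.

Inductive term (L : Language) : Type :=
| tvar : nat -> term L
| tapp : forall f : Fsym L, (Fin.t (farity f) -> term L) -> term L.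
Arguments tvar {L} _.
Arguments tapp {L} f _.

Inductive qfform (L : Language) : Type :=
| fatom : forall P : Psym L, (Fin.t (parity P) -> term L) -> qfform L
| fmeet : qfform L -> qfform L -> qfform L
| fjoin : qfform L -> qfform L -> qfform L
| fconj : qfform L -> qfform L -> qfform L
| fimpl : qfform L -> qfform L -> qfform L
| fzero : qfform L
| fone  : qfform L
| fbot  : qfform L
| ftop  : qfform L.
Arguments fatom {L} P _.

Record AStr (L : Language) (A : ULAlgebra) (M : Type) := {
  funI  : forall f : Fsym L, (Fin.t (farity f) -> M) -> M;
  predI : forall P : Psym L, (Fin.t (parity P) -> M) -> A
}.
Arguments funI {L A M} a f _.
Arguments predI {L A M} a P _.
Arguments Build_AStr {L A M} _ _.

Fixpoint tval (L : Language) (A : ULAlgebra) (M : Type) (S : AStr L A M)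
  (v : nat -> M) (t : term L) : M :=
  match t with
  | tvar n => v n
  | tapp f args => funI S f (fun i => tval S v (args i))
  end.

Fixpoint fval (L : Language) (A : ULAlgebra) (M : Type) (S : AStr L A M)
  (v : nat -> M) (phi : qfform L) : A :=
  match phi with
  | fatom P args => predI S P (fun i => tval S v (args i))
  | fmeet p q => @ul_meet A (fval S v p) (fval S v q)
  | fjoin p q => @ul_join A (fval S v p) (fval S v q)
  | fconj p q => @ul_conj A (fval S v p) (fval S v q)
  | fimpl p q => @ul_impl A (fval S v p) (fval S v q)
  | fzero _ => @ul_zero A
  | fone _ => @ul_one A
  | fbot _ => @ul_bot A
  | ftop _ => @ul_top A
  end.

Definition embedding (L : Language) (A : ULAlgebra) (M N : Type)
  (SM : AStr L A M) (SN : AStr L A N) (e : M -> N) : Prop :=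
  (forall x y, e x = e y -> x = y) /\
  (forall f args, e (funI SM f args) = funI SN f (fun i => e (args i))) /\
  (forall (phi : qfform L) (v : nat -> M), fval SM v phi = fval SN (fun n => e (v n)) phi).

Definition isomorphic (L : Language) (A : ULAlgebra) (M N : Type)
  (SM : AStr L A M) (SN : AStr L A N) : Prop :=
  exists e : M -> N, embedding SM SN e /\ (forall y, exists x, e x = y).

Definition fclosed (L : Language) (A : ULAlgebra) (N : Type) (SN : AStr L A N)
  (X : N -> Prop) : Prop :=
  forall f args, (forall i, X (args i)) -> X (funI SN f args).

Definition subS (L : Language) (A : ULAlgebra) (N : Type) (SN : AStr L A N)
  (X : N -> Prop) (HX : fclosed SN X) : AStr L A {x : N | X x} :=
  {| funI := fun f args =>
       exist X (funI SN f (fun i => proj1_sig (args i)))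
             (HX f (fun i => proj1_sig (args i)) (fun i => proj2_sig (args i)));
     predI := fun P args => predI SN P (fun i => proj1_sig (args i)) |}.
Arguments subS {L A N} SN X HX.

Inductive generated (L : Language) (A : ULAlgebra) (M : Type) (S : AStr L A M)
  (l : list M) : M -> Prop :=
| gen_base : forall x, In x l -> generated S l x
| gen_app : forall f args, (forall i, generated S l (args i)) ->
    generated S l (funI S f args).

Definition fin_generated (L : Language) (A : ULAlgebra) (M : Type) (S : AStr L A M) : Prop :=
  exists l : list M, forall x, generated S l x.

Definition inAge (L : Language) (A : ULAlgebra) (N : Type) (SN : AStr L A N)
  (B : Type) (SB : AStr L A B) : Prop :=
  exists (X : N -> Prop) (HX : fclosed SN X),
    fin_generated (subS SN X HX) /\ isomorphic SB (subS SN X HX).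

Definition age_sub (L : Language) (A : ULAlgebra) (M N : Type)
  (SM : AStr L A M) (SN : AStr L A N) : Prop :=
  forall (B : Type) (SB : AStr L A B), inAge SM SB -> inAge SN SB.

Definition StrClass (L : Language) (A : ULAlgebra) := forall M : Type, AStr L A M -> Prop.

Definition iso_closed (L : Language) (A : ULAlgebra) (K : StrClass L A) : Prop :=
  forall (M N : Type) (SM : AStr L A M) (SN : AStr L A N),
    isomorphic SM SN -> K M SM -> K N SN.

Definition HP (L : Language) (A : ULAlgebra) (K : StrClass L A) : Prop :=
  forall (N : Type) (SN : AStr L A N) (X : N -> Prop) (HX : fclosed SN X),
    K N SN -> K _ (subS SN X HX).

Definition JEP (L : Language) (A : ULAlgebra) (K : StrClass L A) : Prop :=
  forall (M1 M2 : Type) (S1 : AStr L A M1) (S2 : AStr L A M2),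
    K M1 S1 -> K M2 S2 ->
    exists (M : Type) (S : AStr L A M) (e1 : M1 -> M) (e2 : M2 -> M),
      K M S /\ embedding S1 S e1 /\ embedding S2 S e2.

(** A chain is a nonempty family of
    substructures (X i) of the union structure SU, linearly ordered by
    inclusion (each a substructure of the later ones), whose universes cover U;
    SU is then exactly the union of the chain (interpretations inherited). *)
Definition union_closed (L : Language) (A : ULAlgebra) (K : StrClass L A) : Prop :=
  forall (U : Type) (SU : AStr L A U) (I : Type) (X : I -> U -> Prop)
         (HX : forall i, fclosed SU (X i)),
    inhabited I ->
    (forall i j, (forall u, X i u -> X j u) \/ (forall u, X j u -> X i u)) ->
    (forall u, exists i, X i u) ->
    (forall i, K _ (subS SU (X i) (HX i))) ->
    K U SU.

(* Main.v *)
Require Import Defs.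
From Stdlib Require Import List Classical ClassicalEpsilon ProofIrrelevance FunctionalExtensionality PropExtensionality Eqdep Arith Lia.
From mathcomp Require all_boot classical_sets wochoice boolp.
Module ZW.
Import all_boot classical_sets wochoice boolp.
Lemma my_zorn (T : Type) (t0 : T) (R : T -> T -> Prop) :
  (forall t, R t t) -> (forall r s t, R r s -> R s t -> R r t) ->
  (forall C : T -> Prop, (forall s t, C s -> C t -> R s t \/ R t s) ->
     exists u, forall s, C s -> R s u) ->
  exists t, forall s, R t s -> R s t.
Proof.
move=> Rr Rt Rc.
have [||C Ctot|t Ht] := @ZL_preorder T t0 (fun x y => `[< R x y >]).
- by move=> x; apply/asboolP.
- by move=> x y z /asboolP h1 /asboolP h2; apply/asboolP; apply: Rt h1 h2.
- have [|u Hu] := Rc C.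
    by move=> s t Cs Ct; case: (Ctot s t Cs Ct) => /asboolP; auto.
  by exists u => s Cs; apply/asboolP; apply: Hu.
by exists t => s /asboolP /Ht /asboolP.
Qed.

Lemma my_wo (T : Type) : exists R : T -> T -> Prop,
  well_founded R /\ (forall x y z, R x y -> R y z -> R x z) /\
  (forall x y, R x y \/ x = y \/ R y x) /\ (forall x, ~ R x x).
Proof.
have [R0 HR] := @well_ordering_principle {classic T}.
have Hmin : forall P : T -> Prop, (exists x, P x) -> exists z, P z /\ forall x, P x -> R0 z x.
  move=> P [x Px].
  have [|z [[zin zlb] _]] := HR [pred y | `[< P y >]].
    by exists x; rewrite inE.
  exists z; split; first by move: zin; rewrite inE.
  by move=> y Py; apply: zlb; rewrite inE.
have Htot : forall x y, R0 x y \/ R0 y x.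
  move=> x y; have [z [Hz Hl]] := Hmin (fun w => w = x \/ w = y) (ex_intro _ x (or_introl erefl)).
  case: Hz => e; subst z; [left|right]; apply: Hl; auto.
have Hanti : forall x y, R0 x y -> R0 y x -> x = y.
  move=> x y h1 h2.
  have [|z [[zin zlb] zu]] := HR [pred w | `[< w = x \/ w = y >]].
    by exists x; rewrite inE; left.
  have ex : z = x.
    apply: zu; split; first by rewrite inE; left.
    move=> w; rewrite inE; case=> ->; first [done | by case: (Htot x x) | by case: (Htot y y)].
  have ey : z = y.
    apply: zu; split; first by rewrite inE; right.
    move=> w; rewrite inE; case=> ->; first [done | by case: (Htot x x) | by case: (Htot y y)].
  by rewrite -ex -ey.
have Htr : forall x y z, R0 x y -> R0 y z -> R0 x z.
  move=> x y z h1 h2.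
  have [m [Hm Hl]] := Hmin (fun w => w = x \/ w = y \/ w = z) (ex_intro _ x (or_introl erefl)).
  case: Hm => [e|[e|e]]; subst m.
  - by apply: Hl; auto.
  - have e := Hanti _ _ h1 (Hl x (or_introl erefl)). by rewrite e.
  - have e := Hanti _ _ h2 (Hl y (or_intror (or_introl erefl))). by rewrite -e.
exists (fun x y => R0 x y /\ x <> y); split; last split; last split.
- move=> a; apply: Classical_Prop.NNPP => Hna.
  have [z [Hz Hl]] := Hmin (fun w => ~ Acc (fun x y => R0 x y /\ x <> y) w) (ex_intro _ a Hna).
  apply: Hz; constructor => y [h1 h2].
  apply: Classical_Prop.NNPP => Hy; apply: h2; apply: Hanti h1 (Hl y Hy).
- move=> x y z [h1 h2] [h3 h4]; split; first exact: Htr h1 h3.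
  move=> e; move: e h1 h2 => -> h1 h2; apply: h4; exact: Hanti.
- move=> x y; case: (Classical_Prop.classic (x = y)) => [->|ne]; first by right; left.
  by case: (Htot x y) => h; [left|right; right]; split => //; move=> e; apply: ne.
- by move=> x [_ h].
Qed.
End ZW.




Definition cid {T : Type} {P : T -> Prop} (H : exists x, P x) : {x | P x} :=
  constructive_indefinite_description P H.

Lemma sig_eq {T : Type} {P : T -> Prop} (x y : {t | P t}) :
  proj1_sig x = proj1_sig y -> x = y.
Proof. destruct x as [x px], y as [y py]; simpl; intros e; subst y; f_equal; apply proof_irrelevance. Qed.

Section Basics.
Context {L : Language} {A : ULAlgebra}.

Definition hom {M N : Type} (SM : AStr L A M) (SN : AStr L A N) (e : M -> N) : Prop :=
  (forall f args, e (funI SM f args) = funI SN f (fun i => e (args i))) /\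
  (forall P args, predI SN P (fun i => e (args i)) = predI SM P args).

Lemma tval_hom {M N : Type} (SM : AStr L A M) (SN : AStr L A N) (e : M -> N) :
  (forall f args, e (funI SM f args) = funI SN f (fun i => e (args i))) ->
  forall v t, e (tval SM v t) = tval SN (fun n => e (v n)) t.
Proof.
  intros H v t; induction t as [n|f args IH]; simpl; [reflexivity|].
  rewrite H; f_equal; apply functional_extensionality; intro i; apply IH.
Qed.

Lemma fval_hom {M N : Type} (SM : AStr L A M) (SN : AStr L A N) (e : M -> N) :
  hom SM SN e -> forall v phi, fval SM v phi = fval SN (fun n => e (v n)) phi.
Proof.
  intros [H1 H2] v phi; induction phi; simpl; try congruence.
  rewrite <- H2; f_equal; apply functional_extensionality; intro i.
  apply tval_hom; exact H1.
Qed.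

Lemma hom_emb {M N : Type} (SM : AStr L A M) (SN : AStr L A N) (e : M -> N) :
  hom SM SN e -> (forall x y, e x = e y -> x = y) -> embedding SM SN e.
Proof.
  intros H Hi; split; [exact Hi|split; [exact (proj1 H)|]].
  intros phi v; apply fval_hom; exact H.
Qed.

Lemma emb_hom {M N : Type} (SM : AStr L A M) (SN : AStr L A N) (e : M -> N) :
  embedding SM SN e -> inhabited M -> hom SM SN e.
Proof.
  intros [Hi [Hf Hv]] [d]; split; [exact Hf|].
  intros P args.
  set (v := fun k => match lt_dec k (parity P) with
                     | left H => args (Fin.of_nat_lt H) | right _ => d end).
  assert (Hv' : forall i, v (proj1_sig (Fin.to_nat i)) = args i).
  { intro i; unfold v. destruct (lt_dec _ _) as [h|h].
    - f_equal. rewrite <- (Fin.of_nat_to_nat_inv i) at 2. apply Fin.of_nat_ext.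
    - exfalso; apply h; exact (proj2_sig (Fin.to_nat i)). }
  pose proof (Hv (fatom P (fun i => tvar (proj1_sig (Fin.to_nat i)))) v) as E.
  simpl in E.
  assert (E1 : (fun i => v (proj1_sig (Fin.to_nat i))) = args)
    by (apply functional_extensionality; exact Hv').
  assert (E2 : (fun i => e (v (proj1_sig (Fin.to_nat i)))) = (fun i => e (args i)))
    by (apply functional_extensionality; intro i; rewrite Hv'; reflexivity).
  rewrite E1, E2 in E. symmetry; exact E.
Qed.

Lemma emb_comp {M N P : Type} (SM : AStr L A M) (SN : AStr L A N) (SP : AStr L A P)
  (e1 : M -> N) (e2 : N -> P) :
  embedding SM SN e1 -> embedding SN SP e2 -> embedding SM SP (fun x => e2 (e1 x)).
Proof.
  intros [i1 [f1 v1]] [i2 [f2 v2]]; split; [|split].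
  - intros x y h; apply i1, i2, h.
  - intros f args; rewrite f1, f2; reflexivity.
  - intros phi v; rewrite v1, v2; reflexivity.
Qed.

Lemma iso_sym {M N : Type} (SM : AStr L A M) (SN : AStr L A N) :
  isomorphic SM SN -> isomorphic SN SM.
Proof.
  intros [e [[Hi [Hf Hv]] Hs]].
  set (g := fun y => proj1_sig (cid (Hs y))).
  assert (eg : forall y, e (g y) = y) by (intro y; unfold g; exact (proj2_sig (cid (Hs y)))).
  assert (ge : forall x, g (e x) = x) by (intro x; apply Hi; apply eg).
  exists g; split; [split; [|split]|].
  - intros x y h; rewrite <- (eg x), <- (eg y), h; reflexivity.
  - intros f args; apply Hi; rewrite eg, Hf; f_equal; apply functional_extensionality; intro i; rewrite eg; reflexivity.
  - intros phi v; rewrite Hv; f_equal; apply functional_extensionality; intro n; rewrite eg; reflexivity.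
  - intro x; exists (e x); apply ge.
Qed.

Lemma iso_of_hom {M N : Type} (SM : AStr L A M) (SN : AStr L A N) (e : M -> N) :
  hom SM SN e -> (forall x y, e x = e y -> x = y) -> (forall y, exists x, e x = y) ->
  isomorphic SM SN.
Proof. intros H Hi Hs; exists e; split; [apply hom_emb; assumption|exact Hs]. Qed.

Lemma fval_subS {N : Type} (SN : AStr L A N) (X : N -> Prop) (HX : fclosed SN X) v phi :
  fval (subS SN X HX) v phi = fval SN (fun n => proj1_sig (v n)) phi.
Proof. apply fval_hom; split; reflexivity. Qed.

Lemma emb_corestrict {M N : Type} (SM : AStr L A M) (SN : AStr L A N) (e : M -> N)
  (X : N -> Prop) (HX : fclosed SN X) (H : forall x, X (e x)) :
  embedding SM SN e -> embedding SM (subS SN X HX) (fun x => exist X (e x) (H x)).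
Proof.
  intros [Hi [Hf Hv]]; split; [|split].
  - intros x y h; apply Hi; exact (f_equal (@proj1_sig _ _) h).
  - intros f args; apply sig_eq; simpl; apply Hf.
  - intros phi v; rewrite fval_subS; simpl; apply Hv.
Qed.

Lemma emb_proj {N : Type} (SN : AStr L A N) (X : N -> Prop) (HX : fclosed SN X) :
  embedding (subS SN X HX) SN (@proj1_sig _ _).
Proof. apply hom_emb; [split; reflexivity|intros x y; apply sig_eq]. Qed.

Lemma fg_iso {M N : Type} (SM : AStr L A M) (SN : AStr L A N) (e : M -> N) :
  embedding SM SN e -> (forall y, exists x, e x = y) -> fin_generated SM -> fin_generated SN.
Proof.
  intros [Hi [Hf Hv]] Hs [l Hl]; exists (map e l).
  assert (G : forall x, generated SM l x -> generated SN (map e l) (e x)).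
  { intros x Hx; induction Hx as [x Hx|f args Ha IH].
    - apply gen_base, in_map, Hx.
    - rewrite Hf; apply gen_app; exact IH. }
  intro y; destruct (Hs y) as [x <-]; apply G, Hl.
Qed.

Inductive gen {N : Type} (SN : AStr L A N) (B : N -> Prop) : N -> Prop :=
| gb : forall x, B x -> gen SN B x
| ga : forall f args, (forall i, gen SN B (args i)) -> gen SN B (funI SN f args).

Lemma gen_fcl {N : Type} (SN : AStr L A N) (B : N -> Prop) : fclosed SN (gen SN B).
Proof. intros f args H; apply ga; exact H. Qed.

Lemma gen_mono {N : Type} (SN : AStr L A N) (B1 B2 : N -> Prop) :
  (forall x, B1 x -> B2 x) -> forall x, gen SN B1 x -> gen SN B2 x.
Proof. intros H x Hx; induction Hx; [constructor 1; auto|constructor 2; auto]. Qed.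

Lemma fg_gen {N : Type} (SN : AStr L A N) (B : N -> Prop) (l : list N) :
  (forall x, B x -> In x l) -> fin_generated (subS SN (gen SN B) (gen_fcl SN B)).
Proof.
  intro Hl.
  assert (Hl' : forall l0 : list N, exists l' : list {x | gen SN B x},
            forall x (H : gen SN B x), B x -> In x l0 -> In (exist _ x H) l').
  { induction l0 as [|a l0 IH].
    - exists nil; intros x H _ [].
    - destruct IH as [l0' Hl0'].
      destruct (classic (B a)) as [Ba|nBa].
      + exists (exist _ a (@gb _ SN B a Ba) :: l0'); intros x H Bx [e|i].
        * subst x; left; apply sig_eq; reflexivity.
        * right; apply Hl0'; assumption.
      + exists l0'; intros x H Bx [e|i]; [subst x; contradiction|apply Hl0'; assumption]. }
  destruct (Hl' l) as [l' Hl'']; exists l'.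
  assert (G : forall x, gen SN B x -> forall H : gen SN B x,
             generated (subS SN (gen SN B) (gen_fcl SN B)) l' (exist _ x H)).
  { intros x Hx; induction Hx as [x Bx|f args Ha IH]; intro H.
    - apply gen_base, Hl''; auto.
    - set (args' := fun i => exist (gen SN B) (args i) (Ha i)).
      match goal with |- generated _ _ ?z =>
        replace z with (funI (subS SN (gen SN B) (gen_fcl SN B)) f args')
          by (apply sig_eq; reflexivity) end.
      apply gen_app; intro i; apply IH. }
  intros [x H]; apply G; exact H.
Qed.

End Basics.

(** * Set-theoretic part: Iwamura-style lemma *)

Lemma pigeon {T : Type} (g : T -> T) (l : list T) : forall (B : T -> Prop),
  (forall x y, B x -> B y -> g x = g y -> x = y) ->
  (forall x, B x -> In (g x) l) -> exists l', forall x, B x -> In x l'.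
Proof.
  induction l as [|a l IH]; intros B Hi Hl.
  - exists nil; intros x Bx; destruct (Hl x Bx).
  - destruct (classic (exists x0, B x0 /\ g x0 = a)) as [[x0 [B0 g0]]|no].
    + destruct (IH (fun x => B x /\ x <> x0)) as [l0 H0].
      * intros x y [Bx _] [By _]; apply Hi; auto.
      * intros x [Bx nx]; destruct (Hl x Bx) as [e|i]; [|exact i].
        exfalso; apply nx, Hi; congruence.
      * exists (x0 :: l0); intros x Bx; destruct (classic (x = x0)) as [e|ne];
          [left; auto|right; apply H0; auto].
    + destruct (IH B Hi) as [l0 H0].
      * intros x Bx; destruct (Hl x Bx) as [e|i]; [|exact i].
        exfalso; apply no; exists x; auto.
      * exists l0; exact H0.
Qed.

Lemma dedekind {T : Type} (Y : T -> Prop) :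
  ~ (exists l, forall y, Y y -> In y l) ->
  exists h : nat -> T, (forall n, Y (h n)) /\ (forall n m, h n = h m -> n = m).
Proof.
  intro inf.
  assert (H : forall l : list T, exists y, Y y /\ ~ In y l).
  { intro l; apply NNPP; intro no; apply inf; exists l; intros y Yy.
    apply NNPP; intro ni; apply no; exists y; auto. }
  set (next := fun l => proj1_sig (cid (H l))).
  assert (Hn : forall l, Y (next l) /\ ~ In (next l) l) by (intro l; exact (proj2_sig (cid (H l)))).
  set (pre := fix pre (n : nat) : list T := match n with 0 => nil | S n => next (pre n) :: pre n end).
  exists (fun n => next (pre n)); split; [intro n; apply Hn|].
  assert (Hin : forall m n, m < n -> In (next (pre m)) (pre n)).
  { intros m n; induction n as [|n IHn]; intro h; [lia|].
    simpl; destruct (Nat.eq_dec m n) as [e|ne]; [subst; left; auto|right; apply IHn; lia]. }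
  intros n m e; destruct (Nat.lt_trichotomy n m) as [h|[h|h]]; auto; exfalso.
  - apply (proj2 (Hn (pre m))); rewrite <- e; apply Hin; auto.
  - apply (proj2 (Hn (pre n))); rewrite e; apply Hin; auto.
Qed.

Lemma iwamura (T : Type) (F : (T -> Prop) -> Prop) :
  (forall B, (exists l, forall x, B x -> In x l) -> F B) ->
  (forall (I : Type) (C : I -> T -> Prop), inhabited I ->
     (forall i j, (forall x, C i x -> C j x) \/ (forall x, C j x -> C i x)) ->
     (forall i, F (C i)) -> forall B, (forall x, B x <-> exists i, C i x) -> F B) ->
  F (fun _ => True).
Proof.
  intros Hfin Hch.
  destruct (ZW.my_wo T) as [lt [wf [tr [tri irr]]]].
  set (olt := fun a b : option T => match a, b with
                | Some x, Some y => lt x y | Some _, None => True | None, _ => False end).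
  assert (wfo : well_founded olt).
  { assert (HS : forall x, Acc olt (Some x)).
    { intro x; induction (wf x) as [x _ IH]; constructor; intros [y|] h; simpl in h;
        [apply IH; exact h|destruct h]. }
    intros [x|]; [apply HS|constructor; intros [y|] h; [apply HS|destruct h]]. }
  assert (Claim : forall t B, (exists g : T -> T, (forall x y, B x -> B y -> g x = g y -> x = y) /\
                                     forall x, B x -> olt (Some (g x)) t) -> F B).
  { intro t; induction (wfo t) as [t _ IH]; intros B [g [gi gs]].
    destruct (classic (exists s, olt s t /\ exists g' : T -> T,
                (forall x y, B x -> B y -> g' x = g' y -> x = y) /\
                forall x, B x -> olt (Some (g' x)) s)) as [[s [Hs Hg']]|Hno].
    { exact (IH s Hs B Hg'). }
    destruct (classic (exists l, forall x, B x -> In x l)) as [fin|inf]; [apply Hfin, fin|].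
    destruct (classic (exists x, B x)) as [[x0 B0]|emp];
      [|exfalso; apply inf; exists nil; intros x Bx; apply emp; exists x; exact Bx].
    apply (Hch {b : T | olt (Some b) t}
                (fun i x => B x /\ (lt (g x) (proj1_sig i) \/ g x = proj1_sig i))).
    - exact (inhabits (exist _ (g x0) (gs x0 B0))).
    - intros [i Hi] [j Hj]; simpl.
      destruct (tri i j) as [h|[h|h]]; [left|left|right]; intros x [Bx Hx]; split; auto.
      + destruct Hx as [Hx|Hx]; [left; exact (tr _ _ _ Hx h)|left; subst; auto].
      + subst; auto.
      + destruct Hx as [Hx|Hx]; [left; exact (tr _ _ _ Hx h)|left; subst; auto].
    - intros [b Hb]; simpl.
      destruct (classic (exists c, lt b c /\ olt (Some c) t)) as [[c [bc ct]]|nomax].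
      + apply (IH (Some c) ct); exists g; split.
        * intros x y [Bx _] [By _]; apply gi; auto.
        * intros x [Bx [Hx|Hx]]; simpl; [exact (tr _ _ _ Hx bc)|subst; auto].
      + exfalso.
        assert (Hle : forall x, B x -> lt (g x) b \/ g x = b).
        { intros x Bx; destruct (tri (g x) b) as [h|[h|h]]; auto.
          exfalso; apply nomax; exists (g x); split; auto. }
        assert (Yinf : ~ (exists l, forall y, lt y b -> In y l)).
        { intros [l Hl]; apply inf; apply (pigeon g (b :: l) B gi).
          intros x Bx; destruct (Hle x Bx) as [h|h]; [right; auto|left; auto]. }
        destruct (dedekind (fun y => lt y b) Yinf) as [h [hY hi]].
        set (k := fun y => match excluded_middle_informative (y = b) with
                  | left _ => h 0
                  | right _ => match excluded_middle_informative (exists n, h n = y) with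
                               | left E => h (S (proj1_sig (cid E)))
                               | right _ => y end end).
        assert (kb : k b = h 0) by (unfold k; destruct (excluded_middle_informative (b = b)); tauto).
        assert (khn : forall n, k (h n) = h (S n)).
        { intro n; unfold k; destruct (excluded_middle_informative (h n = b)) as [e|_].
          - exfalso; apply (irr b); rewrite <- e at 1; apply hY.
          - destruct (excluded_middle_informative (exists m, h m = h n)) as [E|E];
              [|exfalso; apply E; exists n; auto].
            f_equal; f_equal; apply hi; exact (proj2_sig (cid E)). }
        assert (ky : forall y, y <> b -> ~ (exists n, h n = y) -> k y = y).
        { intros y n1 n2; unfold k; destruct (excluded_middle_informative (y = b)); [tauto|].
          destruct (excluded_middle_informative (exists n, h n = y)); tauto. }
        apply Hno; exists (Some b); split; [exact Hb|].
        exists (fun x => k (g x)); split.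
        * assert (kinj : forall u w, (lt u b \/ u = b) -> (lt w b \/ w = b) -> k u = k w -> u = w).
          { assert (kcase : forall u, (lt u b \/ u = b) ->
                     (u = b /\ k u = h 0) \/ (exists n, u = h n /\ k u = h (S n)) \/
                     (u <> b /\ ~ (exists n, h n = u) /\ k u = u)).
            { intros u _; destruct (classic (u = b)) as [e|ne]; [left; subst; auto|].
              destruct (classic (exists n, h n = u)) as [[n e]|nn];
                [right; left; exists n; subst; auto|right; right; auto]. }
            intros u w hu hw e.
            destruct (kcase u hu) as [[u1 u2]|[[n [u1 u2]]|[u1 [u2 u3]]]];
            destruct (kcase w hw) as [[w1 w2]|[[m [w1 w2]]|[w1 [w2 w3]]]].
            - rewrite u1, w1; reflexivity.
            - rewrite u2, w2 in e; apply hi in e; discriminate.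
            - rewrite u2, w3 in e; exfalso; apply w2; exists 0; exact e.
            - rewrite u2, w2 in e; apply hi in e; discriminate.
            - rewrite u2, w2 in e; apply hi in e; injection e; intro enm; rewrite u1, w1, enm; reflexivity.
            - rewrite u2, w3 in e; exfalso; apply w2; exists (S n); exact e.
            - rewrite u3, w2 in e; exfalso; apply u2; exists 0; symmetry; exact e.
            - rewrite u3, w2 in e; exfalso; apply u2; exists (S m); symmetry; exact e.
            - rewrite u3, w3 in e; exact e. }
          intros x y Bx By e; apply gi; auto; apply kinj; auto; apply Hle; auto.
        * intros x Bx; simpl.
          destruct (Hle x Bx) as [hx|hx].
          -- destruct (classic (exists n, h n = g x)) as [[n e]|nn].
             ++ rewrite <- e, khn; apply hY.
             ++ rewrite ky; auto; intro e; rewrite e in hx; apply (irr b hx).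
          -- rewrite hx, kb; apply hY.
    - intro x; split.
      + intro Bx; exists (exist _ (g x) (gs x Bx)); simpl; auto.
      + intros [i [Bx _]]; exact Bx. }
  apply (Claim None); exists (fun x => x); split; auto; intros; simpl; auto.
Qed.

Lemma fin_dir {I : Type} (le : I -> I -> Prop) :
  inhabited I -> (forall i j, le i j \/ le j i) ->
  forall n (Q : Fin.t n -> I -> Prop), (forall k i j, le i j -> Q k i -> Q k j) ->
  (forall k, exists i, Q k i) -> exists i, forall k, Q k i.
Proof.
  intros [i0] tot n; induction n as [|n IH]; intros Q Hm Hex.
  - exists i0; intro k; apply (Fin.case0 (fun k => Q k i0) k).
  - destruct (IH (fun k => Q (Fin.FS k))) as [i1 H1].
    + intros k i j; apply Hm.
    + intro k; apply Hex.
    + destruct (Hex Fin.F1) as [j0 H0].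
      destruct (tot j0 i1) as [h|h].
      * exists i1; intro k; pattern k; apply Fin.caseS'; [eapply Hm; eauto|exact H1].
      * exists j0; intro k; pattern k; apply Fin.caseS'; [exact H0|intro p; eapply Hm; eauto].
Qed.

Section PartB.
Context {L : Language} {A : ULAlgebra} (K : StrClass L A).
Hypotheses (Kiso : iso_closed K) (Khp : HP K) (Kun : union_closed K).

Lemma partB (M : Type) (SM : AStr L A M) :
  (forall X HX, fin_generated (subS SM X HX) -> K _ (subS SM X HX)) -> K M SM.
Proof.
  intro Hfg.
  set (F := fun B : M -> Prop => K _ (subS SM (gen SM B) (gen_fcl SM B))).
  assert (HT : F (fun _ => True)).
  { apply iwamura.
    - intros B [l Hl]; apply Hfg; apply (fg_gen SM B l Hl).
    - intros I C inh ch FC B HB; unfold F.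
      set (SU := subS SM (gen SM B) (gen_fcl SM B)).
      assert (CB : forall i x, gen SM (C i) x -> gen SM B x).
      { intros i; apply gen_mono; intros x h; apply HB; exists i; exact h. }
      assert (HX : forall i, fclosed SU (fun u => gen SM (C i) (proj1_sig u))).
      { intros i f args H; simpl; apply ga; exact H. }
      apply (Kun _ SU I (fun i u => gen SM (C i) (proj1_sig u)) HX inh).
      + intros i j; destruct (ch i j) as [h|h]; [left|right]; intro u; apply gen_mono; exact h.
      + intros [x Hx]; simpl.
        induction Hx as [x Bx|f args Ha IH].
        * destruct (proj1 (HB x) Bx) as [i Hi]; exists i; apply gb; exact Hi.
        * destruct (fin_dir (fun i j => forall x, C i x -> C j x) inh ch _
                      (fun k i => gen SM (C i) (args k))) as [i Hi].
          -- intros k i j h; apply gen_mono; exact h.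
          -- exact IH.
          -- exists i; apply ga; exact Hi.
      + intro i; apply (Kiso _ _ (subS SM (gen SM (C i)) (gen_fcl SM (C i)))); [|exact (FC i)].
        apply (iso_of_hom _ _ (fun x => exist (fun u => gen SM (C i) (proj1_sig u))
                 (exist (gen SM B) (proj1_sig x) (CB i _ (proj2_sig x))) (proj2_sig x))).
        * split; [intros f args; apply sig_eq; apply sig_eq; reflexivity|intros P args; reflexivity].
        * intros x y e; apply sig_eq; exact (f_equal (fun z => proj1_sig (proj1_sig z)) e).
        * intros [[x Hx] Hc]; exists (exist _ x Hc); apply sig_eq; apply sig_eq; reflexivity. }
  apply (Kiso _ _ (subS SM (gen SM (fun _ => True)) (gen_fcl SM (fun _ => True)))); [|exact HT].
  apply (iso_of_hom _ _ (@proj1_sig _ _)).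
  - split; reflexivity.
  - intros x y; apply sig_eq.
  - intro y; exists (exist _ y (gb SM (fun _ => True) y I)); reflexivity.
Qed.

End PartB.

Section PartA.
Context {L : Language} {A : ULAlgebra} (K : StrClass L A).
Hypotheses (Kiso : iso_closed K) (Khp : HP K) (Kjep : JEP K) (Kun : union_closed K).

Inductive tm (V : Type) : Type :=
| tv : V -> tm V
| ta : forall f : Fsym L, (Fin.t (farity f) -> tm V) -> tm V.
Arguments tv {V} _.
Arguments ta {V} f _.

Lemma transport {B O : Type} (SB : AStr L A B) (j : B -> O) (ji : forall x y, j x = j y -> x = y) :
  { S' : AStr L A {w | exists b, j b = w} |
    hom SB S' (fun b => exist (fun w => exists b, j b = w) (j b) (ex_intro _ b eq_refl)) }.
Proof.
  set (tau := fun b => exist (fun w => exists b, j b = w) (j b) (ex_intro _ b eq_refl)).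
  set (inv := fun (w : {w | exists b, j b = w}) => proj1_sig (cid (proj2_sig w))).
  assert (it : forall b, inv (tau b) = b).
  { intro b; apply ji; unfold inv; exact (proj2_sig (cid (proj2_sig (tau b)))). }
  exists (Build_AStr (fun f args => tau (funI SB f (fun i => inv (args i))))
                     (fun P args => predI SB P (fun i => inv (args i)))).
  split; simpl.
  - intros f args; f_equal; f_equal; apply functional_extensionality; intro i; rewrite it; reflexivity.
  - intros P args; f_equal; apply functional_extensionality; intro i; rewrite it; reflexivity.
Qed.

Lemma tau_inj {B O : Type} (j : B -> O) (ji : forall x y, j x = j y -> x = y) :
  forall x y, exist (fun w => exists b, j b = w) (j x) (ex_intro _ x eq_refl) =
              exist (fun w => exists b, j b = w) (j y) (ex_intro _ y eq_refl) -> x = y.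
Proof. intros x y e; apply ji; exact (f_equal (@proj1_sig _ _) e). Qed.

Lemma tau_surj {B O : Type} (j : B -> O) :
  forall w : {w | exists b, j b = w}, exists x,
    exist (fun w => exists b, j b = w) (j x) (ex_intro _ x eq_refl) = w.
Proof. intros [w [b e]]; exists b; apply sig_eq; exact e. Qed.

Record Phi : Type := mkPhi { pC : tm nat -> Prop; pS : AStr L A {t | pC t}; pK : K _ pS }.
Definition car (ph : Phi) : Type := {t | pC ph t}.
Definition VV : Type := {ph : Phi & car ph}.
Definition Om : Type := tm VV.

Lemma represent (B : Type) (SB : AStr L A B) :
  K B SB -> fin_generated SB -> exists ph : Phi, exists e : B -> car ph, embedding SB (pS ph) e.
Proof.
  intros KB [l Hl].
  assert (Hrep : exists rep : B -> tm nat, forall x y, rep x = rep y -> x = y).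
  { destruct (classic (inhabited B)) as [[d]|nB].
    - set (ev := fix ev (t : tm nat) : B := match t with
                   | tv n => nth n l d | ta f ts => funI SB f (fun i => ev (ts i)) end).
      assert (Hev : forall b, exists t, ev t = b).
      { intro b; induction (Hl b) as [x Hx|f args Ha IH].
        - destruct (In_nth l x d Hx) as [n [_ e]]; exists (tv n); exact e.
        - exists (ta f (fun i => proj1_sig (cid (IH i)))); simpl; f_equal.
          apply functional_extensionality; intro i; exact (proj2_sig (cid (IH i))). }
      exists (fun b => proj1_sig (cid (Hev b))); intros x y e.
      rewrite <- (proj2_sig (cid (Hev x))), <- (proj2_sig (cid (Hev y))), e; reflexivity.
    - exists (fun b => False_rect _ (nB (inhabits b))); intros x; destruct (nB (inhabits x)). }
  destruct Hrep as [rep ri].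
  destruct (transport SB rep ri) as [S' hS'].
  assert (KS' : K _ S').
  { apply (Kiso _ _ SB S'); [|exact KB].
    exact (iso_of_hom _ _ _ hS' (tau_inj rep ri) (tau_surj rep)). }
  exists (mkPhi (fun w => exists b, rep b = w) S' KS').
  exists (fun b => exist (fun w => exists b, rep b = w) (rep b) (ex_intro _ b eq_refl)).
  apply hom_emb; [exact hS'|exact (tau_inj rep ri)].
Qed.

Record Raw : Type := mkRaw { rD : Phi -> Prop; rS : Om -> Prop; rSS : AStr L A {w | rS w};
                             rr : VV -> Om }.

Inductive evg {N : Type} (SN : AStr L A N) (sg : VV -> N -> Prop) : Om -> N -> Prop :=
| evv : forall v y, sg v y -> evg SN sg (tv v) y
| eva : forall f ts ys, (forall i, evg SN sg (ts i) (ys i)) -> evg SN sg (ta f ts) (funI SN f ys).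

Lemma evg_ta_inv {N : Type} (SN : AStr L A N) sg f ts y :
  evg SN sg (ta f ts) y -> exists ys, (forall i, evg SN sg (ts i) (ys i)) /\ y = funI SN f ys.
Proof.
  intro H; remember (ta f ts) as t eqn:Et; destruct H as [v y Hv|f' ts' ys Hs]; [discriminate|].
  injection Et; intros E1 E2; subst f'. apply inj_pair2 in E1; subst ts'.
  exists ys; split; [exact Hs|reflexivity].
Qed.

Lemma evg_tv_inv {N : Type} (SN : AStr L A N) sg v y : evg SN sg (tv v) y -> sg v y.
Proof.
  intro H; remember (tv v) as t eqn:Et; destruct H as [v' y Hv|f' ts' ys Hs]; [|discriminate].
  injection Et; intro; subst; exact Hv.
Qed.

Lemma evg_det {N : Type} (SN : AStr L A N) sg :
  (forall v y y', sg v y -> sg v y' -> y = y') ->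
  forall t y y', evg SN sg t y -> evg SN sg t y' -> y = y'.
Proof.
  intros Hf t y y' H; revert y'; induction H as [v y Hv|f ts ys Hs IH]; intros y' H'.
  - apply evg_tv_inv in H'; eauto.
  - apply evg_ta_inv in H'; destruct H' as [ys' [Hs' ->]]; f_equal.
    apply functional_extensionality; intro i; apply IH; apply Hs'.
Qed.

Lemma evg_map {N N' : Type} (SN : AStr L A N) (SN' : AStr L A N') sg sg' (h : N -> N') :
  (forall f args, h (funI SN f args) = funI SN' f (fun i => h (args i))) ->
  (forall v y, sg v y -> sg' v (h y)) ->
  forall t y, evg SN sg t y -> evg SN' sg' t (h y).
Proof.
  intros Hf Hs t y H; induction H as [v y Hv|f ts ys Hts IH].
  - apply evv; auto.
  - rewrite Hf; apply eva; exact IH.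
Qed.

Definition sgR (r : Raw) : VV -> {w | rS r w} -> Prop :=
  fun v x => rD r (projT1 v) /\ proj1_sig x = rr r v.

Definition good (r : Raw) : Prop :=
  K _ (rSS r) /\ (exists w, rS r w) /\
  (forall x, evg (rSS r) (sgR r) (proj1_sig x) x) /\
  (forall ph, rD r ph -> exists e : car ph -> {w | rS r w},
       embedding (pS ph) (rSS r) e /\ forall c, proj1_sig (e c) = rr r (existT _ ph c)).

Definition leR (p q : Raw) : Prop :=
  (forall ph, rD p ph -> rD q ph) /\
  (forall v, rD p (projT1 v) -> rr p v = rr q v) /\
  (forall w, rS p w -> rS q w) /\
  (forall f args args', (forall i, proj1_sig (args' i) = proj1_sig (args i)) ->
     proj1_sig (funI (rSS q) f args') = proj1_sig (funI (rSS p) f args)) /\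
  (forall P args args', (forall i, proj1_sig (args' i) = proj1_sig (args i)) ->
     predI (rSS q) P args' = predI (rSS p) P args).

Lemma leR_refl r : leR r r.
Proof.
  split; [auto|split; [auto|split; [auto|split]]].
  - intros f args args' H; replace args' with args; [reflexivity|].
    apply functional_extensionality; intro i; apply sig_eq; symmetry; apply H.
  - intros P args args' H; replace args' with args; [reflexivity|].
    apply functional_extensionality; intro i; apply sig_eq; symmetry; apply H.
Qed.

Lemma leR_trans p q r : leR p q -> leR q r -> leR p r.
Proof.
  intros [d1 [r1 [s1 [f1 p1]]]] [d2 [r2 [s2 [f2 p2]]]].
  split; [auto|split; [|split; [auto|split]]].
  - intros v h; rewrite r1 by exact h; apply r2, d1, h.
  - intros f args args'' H.
    set (aq := fun i => exist (rS q) (proj1_sig (args i)) (s1 _ (proj2_sig (args i)))).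
    rewrite (f2 f aq args''); [apply f1; reflexivity|].
    intro i; rewrite H; reflexivity.
  - intros P args args'' H.
    set (aq := fun i => exist (rS q) (proj1_sig (args i)) (s1 _ (proj2_sig (args i)))).
    rewrite (p2 P aq args''); [apply p1; reflexivity|].
    intro i; rewrite H; reflexivity.
Qed.

Lemma eval_le p q : leR p q -> forall t x, evg (rSS p) (sgR p) t x ->
  forall x', proj1_sig x' = proj1_sig x -> evg (rSS q) (sgR q) t x'.
Proof.
  intros [d1 [r1 [s1 [f1 p1]]]] t x H; induction H as [v x [Hd Hx]|f ts xs Hts IH]; intros x' e.
  - apply evv; split; [auto|]; rewrite e, Hx; apply r1; exact Hd.
  - set (xs' := fun i => exist (rS q) (proj1_sig (xs i)) (s1 _ (proj2_sig (xs i)))).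
    replace x' with (funI (rSS q) f xs').
    + apply eva; intro i; apply IH; reflexivity.
    + apply sig_eq; rewrite e; apply f1; reflexivity.
Qed.

Definition Pt : Type := {r : Raw | good r}.
Definition le (a b : Pt) : Prop := leR (proj1_sig a) (proj1_sig b).



Lemma base_pt : (exists (M1 : Type) (S1 : AStr L A M1), K M1 S1 /\ inhabited M1) -> exists p : Pt, True.
Proof.
  intros [M1 [S1 [K1 [m]]]].
  set (X := gen S1 (fun x => x = m)).
  assert (fgX : fin_generated (subS S1 X (gen_fcl S1 _)))
    by (apply (fg_gen S1 _ (m :: nil)); intros x e; left; auto).
  destruct (represent _ _ (Khp _ _ _ _ K1) fgX) as [ph0 [e0 He0]].
  set (c0 := e0 (exist X m (gb S1 _ m eq_refl))).
  set (j := fun c : car ph0 => @tv VV (existT _ ph0 c)).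
  assert (ji : forall x y, j x = j y -> x = y).
  { intros x y h; injection h; intro h'; apply inj_pair2 in h'; exact h'. }
  destruct (transport (pS ph0) j ji) as [S0 hS0].
  set (r0 := mkRaw (fun ps => ps = ph0) (fun w => exists c, j c = w) S0 (fun v => tv v)).
  assert (g0 : good r0).
  { split; [|split; [|split]].
    - apply (Kiso _ _ (pS ph0)); [|exact (pK ph0)].
      exact (iso_of_hom _ _ _ hS0 (tau_inj j ji) (tau_surj j)).
    - exists (j c0); exists c0; reflexivity.
    - intros [w [c Hc]]; subst w; simpl. apply evv; split; reflexivity.
    - intros ps e; simpl in e; subst ps.
      exists (fun c => exist (fun w => exists c, j c = w) (j c) (ex_intro _ c eq_refl)); split.
      + apply hom_emb; [exact hS0|exact (tau_inj j ji)].
      + intro c; reflexivity. }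
  exists (exist _ r0 g0); exact I.
Qed.

Section Chain.
Variables (Ch : Pt -> Prop) (p0 : Pt) (H0 : Ch p0)
          (tot : forall a b, Ch a -> Ch b -> le a b \/ le b a).

Let R (p : Pt) : Raw := proj1_sig p.
Let SU (w : Om) : Prop := exists p, Ch p /\ rS (R p) w.
Let carU := {w | SU w}.

Lemma dirU n (args : Fin.t n -> carU) :
  exists p, Ch p /\ forall i, rS (R p) (proj1_sig (args i)).
Proof.
  destruct (fin_dir (fun a b : {p | Ch p} => le (proj1_sig a) (proj1_sig b))
              (inhabits (exist _ p0 H0))
              (fun a b => tot (proj1_sig a) (proj1_sig b) (proj2_sig a) (proj2_sig b))
              n (fun k a => rS (R (proj1_sig a)) (proj1_sig (args k)))) as [[p Hp] Hi].
  - intros k a b h; apply h.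
  - intro k; destruct (proj2_sig (args k)) as [p [Hp Hw]]; exists (exist _ p Hp); exact Hw.
  - exists p; split; [exact Hp|exact Hi].
Qed.

Definition pullU (p : Pt) n (args : Fin.t n -> carU) (H : forall i, rS (R p) (proj1_sig (args i))) :
  Fin.t n -> {w | rS (R p) w} := fun i => exist _ (proj1_sig (args i)) (H i).
Definition liftU (p : Pt) (Hp : Ch p) (x : {w | rS (R p) w}) : carU :=
  exist SU (proj1_sig x) (ex_intro _ p (conj Hp (proj2_sig x))).
Definition funU f (args : Fin.t (farity f) -> carU) : carU :=
  let H := cid (dirU _ args) in
  liftU (proj1_sig H) (proj1 (proj2_sig H))
        (funI (rSS (R (proj1_sig H))) f (pullU (proj1_sig H) _ args (proj2 (proj2_sig H)))).
Definition predU P (args : Fin.t (parity P) -> carU) : A :=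
  let H := cid (dirU _ args) in
  predI (rSS (R (proj1_sig H))) P (pullU (proj1_sig H) _ args (proj2 (proj2_sig H))).

Lemma KUf p (Hp : Ch p) f args (args_p : Fin.t (farity f) -> {w | rS (R p) w}) :
  (forall i, proj1_sig (args i) = proj1_sig (args_p i)) ->
  proj1_sig (funU f args) = proj1_sig (funI (rSS (R p)) f args_p).
Proof.
  intro E; unfold funU; simpl.
  destruct (cid (dirU _ args)) as [q [Hq Hqa]]; simpl.
  destruct (tot p q Hp Hq) as [h|h]; destruct h as [_ [_ [_ [hf _]]]].
  - apply hf; intro i; simpl; apply E.
  - symmetry; apply hf; intro i; simpl; symmetry; apply E.
Qed.

Lemma KUp p (Hp : Ch p) P args (args_p : Fin.t (parity P) -> {w | rS (R p) w}) :
  (forall i, proj1_sig (args i) = proj1_sig (args_p i)) ->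
  predU P args = predI (rSS (R p)) P args_p.
Proof.
  intro E; unfold predU; simpl.
  destruct (cid (dirU _ args)) as [q [Hq Hqa]]; simpl.
  destruct (tot p q Hp Hq) as [h|h]; destruct h as [_ [_ [_ [_ hp]]]].
  - apply hp; intro i; simpl; apply E.
  - symmetry; apply hp; intro i; simpl; symmetry; apply E.
Qed.

Definition rrU (v : VV) : Om :=
  match excluded_middle_informative (exists p, Ch p /\ rD (R p) (projT1 v)) with
  | left H => rr (R (proj1_sig (cid H))) v
  | right _ => tv v end.

Definition rawU : Raw :=
  mkRaw (fun ph => exists p, Ch p /\ rD (R p) ph) SU (Build_AStr funU predU) rrU.

Lemma leU p : Ch p -> leR (R p) rawU.
Proof.
  intro Hp; split; [|split; [|split; [|split]]].
  - intros ph h; exists p; auto.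
  - intros v h; simpl; unfold rrU.
    destruct (excluded_middle_informative _) as [H|H]; [|exfalso; apply H; exists p; auto].
    destruct (cid H) as [q [Hq Hd]]; simpl.
    destruct (tot p q Hp Hq) as [hh|hh]; destruct hh as [_ [hr _]].
    + apply hr; exact h.
    + symmetry; apply hr; exact Hd.
  - intros w h; exists p; auto.
  - intros f args args' E; exact (KUf p Hp f args' args E).
  - intros P args args' E; exact (KUp p Hp P args' args E).
Qed.

Lemma liftU_emb p (Hp : Ch p) : embedding (rSS (R p)) (rSS rawU) (liftU p Hp).
Proof.
  apply hom_emb.
  - split.
    + intros f args; apply sig_eq; symmetry; exact (KUf p Hp f (fun i => liftU p Hp (args i)) args (fun i => eq_refl)).
    + intros P args; exact (KUp p Hp P (fun i => liftU p Hp (args i)) args (fun i => eq_refl)).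
  - intros x y e; apply sig_eq; exact (f_equal (@proj1_sig _ _) e).
Qed.

Lemma goodU : good rawU.
Proof.
  split; [|split; [|split]].
  - set (X := fun (i : {p | Ch p}) (u : carU) => rS (R (proj1_sig i)) (proj1_sig u)).
    assert (HX : forall i, fclosed (rSS rawU) (X i)).
    { intros [p Hp] f args H; unfold X in *.
      change (rS (R p) (proj1_sig (funU f args))).
      rewrite (KUf p Hp f args (pullU p _ args H)); [apply proj2_sig|reflexivity]. }
    apply (Kun _ (rSS rawU) {p | Ch p} X HX (inhabits (exist _ p0 H0))).
    + intros [a Ha] [b Hb]; unfold X; simpl.
      destruct (tot a b Ha Hb) as [h|h]; [left|right]; intro u; apply h.
    + intros [w [p [Hp Hw]]]; exists (exist _ p Hp); exact Hw.
    + intros [p Hp].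
      apply (Kiso _ _ (rSS (R p))); [|exact (proj1 (proj2_sig p))].
      apply (iso_of_hom _ _ (fun x => exist (X (exist _ p Hp)) (liftU p Hp x) (proj2_sig x))).
      * split.
        -- intros f args; apply sig_eq; apply sig_eq; symmetry; exact (KUf p Hp f (fun i => liftU p Hp (args i)) args (fun i => eq_refl)).
        -- intros P args; exact (KUp p Hp P (fun i => liftU p Hp (args i)) args (fun i => eq_refl)).
      * intros x y e; apply sig_eq; exact (f_equal (fun z => proj1_sig (proj1_sig z)) e).
      * intros [[w Hw] Hx]; exists (exist _ w Hx); apply sig_eq; apply sig_eq; reflexivity.
  - destruct (proj1 (proj2 (proj2_sig p0))) as [w Hw]; exists w; exists p0; auto.
  - intros [w [p [Hp Hw]]].
    apply (eval_le (R p) rawU (leU p Hp) w (exist _ w Hw)); [|reflexivity].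
    exact (proj1 (proj2 (proj2 (proj2_sig p))) (exist _ w Hw)).
  - intros ph [p [Hp Hd]].
    destruct (proj2 (proj2 (proj2 (proj2_sig p))) ph Hd) as [e [He Hc]].
    exists (fun c => liftU p Hp (e c)); split.
    + apply (emb_comp _ _ _ e (liftU p Hp) He (liftU_emb p Hp)).
    + intro c; simpl; rewrite Hc; apply (proj1 (proj2 (leU p Hp))); exact Hd.
Qed.

Lemma chain_ub : exists u : Pt, forall s, Ch s -> le s u.
Proof. exists (exist _ rawU goodU); intros s Hs; apply leU; exact Hs. Qed.

End Chain.
End PartA.

Arguments tv {L V} _.
Arguments ta {L V} f _.

Section Ext.
Context {L : Language} {A : ULAlgebra} (K : StrClass L A).
Hypotheses (Kiso : iso_closed K) (Khp : HP K).
Variables (p : Raw K) (gp : good K p) (ph : Phi K) (nph : ~ rD K p ph)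
          (M' : Type) (S' : AStr L A M') (e1 : {w | rS K p w} -> M') (e2 : car K ph -> M')
          (KS' : K M' S') (em1 : embedding (rSS K p) S' e1) (em2 : embedding (pS K ph) S' e2).

Let Gp (y : M') : Prop := (exists x, e1 x = y) \/ (exists c, e2 c = y).
Let Gs : M' -> Prop := gen S' Gp.
Let G : Type := {y | Gs y}.
Let SG : AStr L A G := subS S' Gs (gen_fcl S' Gp).
Let H1 (x : {w | rS K p w}) : Gs (e1 x) := gb S' Gp (e1 x) (or_introl (ex_intro _ x eq_refl)).
Let H2 (c : car K ph) : Gs (e2 c) := gb S' Gp (e2 c) (or_intror (ex_intro _ c eq_refl)).
Let e1' (x : {w | rS K p w}) : G := exist Gs (e1 x) (H1 x).
Let e2' (c : car K ph) : G := exist Gs (e2 c) (H2 c).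

Lemma e1'_emb : embedding (rSS K p) SG e1'.
Proof. exact (emb_corestrict _ _ e1 Gs (gen_fcl S' Gp) H1 em1). Qed.
Lemma e2'_emb : embedding (pS K ph) SG e2'.
Proof. exact (emb_corestrict _ _ e2 Gs (gen_fcl S' Gp) H2 em2). Qed.

Let sg (v : VV K) (y : G) : Prop :=
  (rD K p (projT1 v) /\ exists x, proj1_sig x = rr K p v /\ proj1_sig y = e1 x) \/
  (exists c, v = existT _ ph c /\ proj1_sig y = e2 c).
Let evS := evg K SG sg.

Lemma sg_fun : forall v y y', sg v y -> sg v y' -> y = y'.
Proof.
  intros v y y' [[d [x [hx hy]]]|[c [hv hy]]] [[d' [x' [hx' hy']]]|[c' [hv' hy']]]; apply sig_eq.
  - rewrite hy, hy'; f_equal; apply sig_eq; congruence.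
  - subst v; simpl in d; contradiction.
  - subst v; simpl in d'; contradiction.
  - rewrite hy, hy'; subst v; apply inj_pair2 in hv'; subst; reflexivity.
Qed.

Lemma evS_det : forall t y y', evS t y -> evS t y' -> y = y'.
Proof. apply evg_det; exact sg_fun. Qed.

Lemma evS_e1 : forall x, evS (proj1_sig x) (e1' x).
Proof.
  intro x; apply (evg_map K (rSS K p) SG (sgR K p) sg e1').
  - exact (proj1 (proj2 e1'_emb)).
  - intros v y [d e]; left; split; [exact d|]; exists y; split; [exact e|reflexivity].
  - exact (proj1 (proj2 (proj2 gp)) x).
Qed.

Lemma evS_ex : forall y : G, exists t, evS t y.
Proof.
  assert (Hm : forall y0, Gs y0 -> forall H : Gs y0, exists t, evS t (exist Gs y0 H)).
  { intros y0 Hy; induction Hy as [y0 [[x e]|[c e]]|f args Ha IH]; intro H.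
    - exists (proj1_sig x); replace (exist Gs y0 H) with (e1' x) by (apply sig_eq; exact e).
      apply evS_e1.
    - exists (tv (existT _ ph c)); apply evv; right; exists c; split; [reflexivity|simpl; auto].
    - exists (ta f (fun i => proj1_sig (cid (IH i (Ha i))))).
      replace (exist Gs (funI S' f args) H) with (funI SG f (fun i => exist Gs (args i) (Ha i)))
        by (apply sig_eq; reflexivity).
      apply eva; intro i; exact (proj2_sig (cid (IH i (Ha i)))). }
  intros [y0 H]; exact (Hm y0 H H).
Qed.

Lemma lab_ex : forall y : G, exists t, evS t y /\
   ((exists x, e1 x = proj1_sig y /\ t = proj1_sig x) \/ ~ (exists x, e1 x = proj1_sig y)).
Proof.
  intro y; destruct (classic (exists x, e1 x = proj1_sig y)) as [[x e]|ne].
  - exists (proj1_sig x); split; [|left; exists x; auto].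
    replace y with (e1' x) by (apply sig_eq; exact e); apply evS_e1.
  - destruct (evS_ex y) as [t Ht]; exists t; auto.
Qed.

Definition lab (y : G) : Om K := proj1_sig (cid (lab_ex y)).

Lemma lab_ev : forall y, evS (lab y) y.
Proof. intro y; exact (proj1 (proj2_sig (cid (lab_ex y)))). Qed.

Lemma lab_inj : forall y y', lab y = lab y' -> y = y'.
Proof. intros y y' e; apply (evS_det (lab y)); [apply lab_ev|rewrite e; apply lab_ev]. Qed.

Lemma lab_e1 : forall x, lab (e1' x) = proj1_sig x.
Proof.
  intro x; unfold lab; destruct (cid (lab_ex (e1' x))) as [t [hev [[x' [e ht]]|ne]]]; simpl.
  - rewrite ht; f_equal; apply (proj1 em1); exact e.
  - exfalso; apply ne; exists x; reflexivity.
Qed.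

Definition rr2 (v : VV K) : Om K :=
  match excluded_middle_informative (exists c, v = existT _ ph c) with
  | left H => lab (e2' (proj1_sig (cid H)))
  | right _ => rr K p v end.

Lemma rr2_ph : forall c, rr2 (existT _ ph c) = lab (e2' c).
Proof.
  intro c; unfold rr2; destruct (excluded_middle_informative _) as [H|H].
  - destruct (cid H) as [c' e]; simpl; apply inj_pair2 in e; subst; reflexivity.
  - exfalso; apply H; exists c; reflexivity.
Qed.

Lemma rr2_other : forall v, projT1 v <> ph -> rr2 v = rr K p v.
Proof.
  intros v n; unfold rr2; destruct (excluded_middle_informative _) as [[c e]|H]; [|reflexivity].
  exfalso; apply n; subst v; reflexivity.
Qed.

Let S2 (w : Om K) : Prop := exists y, lab y = w.
Definition SS2 : AStr L A {w | S2 w} := proj1_sig (transport SG lab lab_inj).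
Let tau (y : G) : {w | S2 w} := exist S2 (lab y) (ex_intro _ y eq_refl).
Lemma tau_hom : hom SG SS2 tau.
Proof. exact (proj2_sig (transport SG lab lab_inj)). Qed.
Lemma tau_emb : embedding SG SS2 tau.
Proof. apply hom_emb; [exact tau_hom|exact (tau_inj lab lab_inj)]. Qed.

Definition q2 : Raw K := mkRaw K (fun ps => rD K p ps \/ ps = ph) S2 SS2 rr2.

Lemma sg_q : forall v y, sg v y -> sgR K q2 v (tau y).
Proof.
  intros v y [[d [x [hx hy]]]|[c [hv hy]]]; split; simpl.
  - left; exact d.
  - replace y with (e1' x) by (apply sig_eq; symmetry; exact hy).
    rewrite lab_e1, hx; symmetry; apply rr2_other; intro e; apply nph; rewrite <- e; exact d.
  - right; subst v; reflexivity.
  - subst v; rewrite rr2_ph; f_equal; apply sig_eq; exact hy.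
Qed.

Lemma good_q2 : good K q2.
Proof.
  destruct gp as [gK [[w0 Hw0] [gH gE]]].
  split; [|split; [|split]].
  - apply (Kiso _ _ SG); [|apply Khp; exact KS'].
    exact (iso_of_hom _ _ tau tau_hom (tau_inj lab lab_inj) (tau_surj lab)).
  - exists (lab (e1' (exist _ w0 Hw0))); exists (e1' (exist _ w0 Hw0)); reflexivity.
  - intros [w [y Hy]]; subst w.
    apply (evg_map K SG SS2 sg (sgR K q2) tau (proj1 tau_hom) sg_q); apply lab_ev.
  - intros ps [d|e].
    + destruct (gE ps d) as [e [He Hc]].
      exists (fun c => tau (e1' (e c))); split.
      * apply (emb_comp _ _ _ e (fun x => tau (e1' x)) He).
        exact (emb_comp _ _ _ e1' tau e1'_emb tau_emb).
      * intro c; simpl; rewrite lab_e1, Hc; symmetry; apply rr2_other; simpl.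
        intro h; apply nph; rewrite <- h; exact d.
    + subst ps; exists (fun c => tau (e2' c)); split.
      * exact (emb_comp _ _ _ e2' tau e2'_emb tau_emb).
      * intro c; simpl; rewrite rr2_ph; reflexivity.
Qed.

Lemma le_q2 : leR K p q2.
Proof.
  destruct gp as [gK [[w0 Hw0] [gH gE]]].
  assert (Ecomp : embedding (rSS K p) SS2 (fun x => tau (e1' x)))
    by exact (emb_comp _ _ _ e1' tau e1'_emb tau_emb).
  assert (Hcomp : hom (rSS K p) SS2 (fun x => tau (e1' x)))
    by (apply emb_hom; [exact Ecomp|exact (inhabits (exist _ w0 Hw0))]).
  assert (Eargs : forall n (args : Fin.t n -> {w | rS K p w}) (args' : Fin.t n -> {w | S2 w}),
            (forall i, proj1_sig (args' i) = proj1_sig (args i)) ->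
            args' = fun i => tau (e1' (args i))).
  { intros n args args' E; apply functional_extensionality; intro i; apply sig_eq.
    rewrite E; simpl; rewrite lab_e1; reflexivity. }
  split; [|split; [|split; [|split]]].
  - intros ps d; left; exact d.
  - intros v d; symmetry; apply rr2_other; intro h; apply nph; rewrite <- h; exact d.
  - intros w Hw; exists (e1' (exist _ w Hw)); rewrite lab_e1; reflexivity.
  - intros f args args' E; rewrite (Eargs _ args args' E).
    simpl rSS; rewrite <- (proj1 Hcomp); simpl; apply lab_e1.
  - intros P args args' E; rewrite (Eargs _ args args' E).
    simpl rSS; exact (proj2 Hcomp P args).
Qed.

End Ext.

Section Final.
Context {L : Language} {A : ULAlgebra} (K : StrClass L A).
Hypotheses (Kiso : iso_closed K) (Khp : HP K) (Kjep : JEP K) (Kun : union_closed K).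

Lemma extend (p : Pt K) (ph : Phi K) :
  ~ rD K (proj1_sig p) ph -> exists q : Pt K, le K p q /\ rD K (proj1_sig q) ph.
Proof.
  intro nph; destruct p as [p gp]; simpl in *.
  destruct (Kjep _ _ (rSS K p) (pS K ph) (proj1 gp) (pK K ph))
    as [M' [S' [e1 [e2 [KS' [em1 em2]]]]]].
  exists (exist _ _ (good_q2 K Kiso Khp p gp ph nph M' S' e1 e2 KS' em1 em2)); split.
  - exact (le_q2 K p gp ph nph M' S' e1 e2 em1).
  - simpl; right; reflexivity.
Qed.

Lemma maximal : (exists (M1 : Type) (S1 : AStr L A M1), K M1 S1 /\ inhabited M1) ->
  exists p : Pt K, forall ph, rD K (proj1_sig p) ph.
Proof.
  intro Hne; destruct (base_pt K Kiso Khp Hne) as [p0 _].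
  destruct (ZW.my_zorn (Pt K) p0 (le K)) as [m Hm].
  - intro t; apply leR_refl.
  - intros r s t; apply leR_trans.
  - intros C tot; destruct (classic (exists c, C c)) as [[c Hc]|no].
    + exact (chain_ub K Kiso Kun C c Hc tot).
    + exists p0; intros s Hs; exfalso; apply no; exists s; exact Hs.
  - exists m; intro ph; apply NNPP; intro nph.
    destruct (extend m ph nph) as [q [hle hd]].
    apply nph; apply (proj1 (Hm q hle)); exact hd.
Qed.

End Final.

Theorem corollary1 (A : ULAlgebra) (L : Language) (K : StrClass L A) :
  UL_chain A ->
  (exists (M0 : Type) (S0 : AStr L A M0), K M0 S0) ->
  iso_closed K ->
  HP K -> JEP K -> union_closed K ->
  exists (N : Type) (SN : AStr L A N),
    forall (M : Type) (SM : AStr L A M), K M SM <-> age_sub SM SN.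
Proof.
  intros _ [M0 [S0 K0]] Kiso Khp Kjep Kun.
  assert (Huniv : exists (N : Type) (SN : AStr L A N), K N SN /\
            forall (B : Type) (SB : AStr L A B), K B SB -> fin_generated SB ->
              exists e, embedding SB SN e).
  { destruct (classic (exists (M1 : Type) (S1 : AStr L A M1), K M1 S1 /\ inhabited M1))
      as [Hne|Hne].
    - destruct (maximal K Kiso Khp Kjep Kun Hne) as [p Hp].
      exists {w | rS K (proj1_sig p) w}, (rSS K (proj1_sig p)); split;
        [exact (proj1 (proj2_sig p))|].
      intros B SB KB fgB; destruct (represent K Kiso B SB KB fgB) as [ph [e He]].
      destruct (proj2 (proj2 (proj2 (proj2_sig p))) ph (Hp ph)) as [e' [He' _]].
      exists (fun b => e' (e b)); exact (emb_comp _ _ _ e e' He He').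
    - exists M0, S0; split; [exact K0|].
      intros B SB KB _.
      assert (Be : ~ inhabited B) by (intro h; apply Hne; exists B, SB; auto).
      exists (fun b => False_rect M0 (Be (inhabits b))); split; [|split].
      + intros x; destruct (Be (inhabits x)).
      + intros f args; destruct (Be (inhabits (funI SB f args))).
      + intros phi v; destruct (Be (inhabits (v 0))). }
  destruct Huniv as [N [SN [KN Hemb]]]; exists N, SN; intros M SM; split.
  - intros KM B SB [X [HX [fgX isoX]]].
    assert (KX : K _ (subS SM X HX)) by (apply Khp; exact KM).
    assert (KB : K B SB) by exact (Kiso _ _ _ _ (iso_sym _ _ isoX) KX).
    assert (fgB : fin_generated SB).
    { destruct (iso_sym _ _ isoX) as [h [Eh Sh]]; exact (fg_iso _ _ h Eh Sh fgX). }
    destruct (Hemb B SB KB fgB) as [g Hg].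
    set (Y := fun y => exists b, g b = y).
    assert (HY : fclosed SN Y).
    { intros f args H; exists (funI SB f (fun i => proj1_sig (cid (H i)))).
      rewrite (proj1 (proj2 Hg)); f_equal; apply functional_extensionality; intro i.
      exact (proj2_sig (cid (H i))). }
    exists Y, HY.
    pose proof (emb_corestrict SB SN g Y HY (fun b => ex_intro _ b eq_refl) Hg) as Eg'.
    assert (Sg' : forall y : {y | Y y}, exists b,
               exist Y (g b) (ex_intro (fun b' => g b' = g b) b eq_refl) = y).
    { intros [y [b e]]; exists b; apply sig_eq; exact e. }
    split; [exact (fg_iso _ _ _ Eg' Sg' fgB)|].
    exists (fun b => exist Y (g b) (ex_intro (fun b' => g b' = g b) b eq_refl)); split;
      [exact Eg'|exact Sg'].
  - intros Hage; apply (partB K Kiso Kun M SM); intros X HX fgX.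
    assert (inA : inAge SM (subS SM X HX)).
    { exists X, HX; split; [exact fgX|].
      exists (fun x => x); split; [apply hom_emb; [split; reflexivity|auto]|].
      intro y; exists y; reflexivity. }
    destruct (Hage _ _ inA) as [Y [HY [fgY isoY]]].
    apply (Kiso _ _ _ _ (iso_sym _ _ isoY)); apply Khp; exact KN.
Qed.
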